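(* Let $t$ be an $\mathrm{SL}_2$-tiling with $t_{ij}=1$. Then $t_{xy}\neq 1$ for all $(x,y)$ with $x<i,\ y<j$, and for all $(x,y)$ with $x>i,\ y>j$.
   Context: An $\mathrm{SL}_2$-tiling is a map $t:\mathbb{Z}\times\mathbb{Z}\to\{1,2,3,\dots\}$, $(i,j)\mapsto t_{ij}$, with $t_{ij}t_{i+1,j+1}-t_{i,j+1}t_{i+1,j}=1$ for all $i,j$. *)

(* Defs.v *)
From Stdlib Require Import ZArith.
Open Scope Z_scope.

Definition is_SL2_tiling (t : Z -> Z -> Z) : Prop :=
  (forall i j, 1 <= t i j) /\
  (forall i j, t i j * t (i+1) (j+1) - t i (j+1) * t (i+1) j = 1).

(* Main.v *)
Require Import Defs.
From Stdlib Require Import ZArith Lia.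
Open Scope Z_scope.

Lemma trans_aux (a b c d e f : Z) : 0 < a -> 0 < b -> 0 < c -> 0 < d ->
  0 < e -> 0 < f -> a * d > b * c -> c * f > d * e -> a * f > b * e.
Proof.
  intros.
  assert (H7 : (a*f - b*e) * (c*d) > 0).
  { assert (a*d*(c*f) > b*c*(c*f)) by (apply Zmult_gt_compat_r; lia).
    assert (b*c*(c*f) > b*c*(d*e)).
    { apply Zmult_gt_compat_l; lia. }
    nia. }
  assert (0 < c*d) by lia.
  destruct (Z_gt_le_dec (a*f - b*e) 0); [lia|].
  assert ((a*f - b*e) * (c*d) <= 0) by (apply Z.mul_nonpos_nonneg; lia). lia.
Qed.

Section S.
Variable t : Z -> Z -> Z.
Hypothesis Hpos : forall i j, 1 <= t i j.
Hypothesis Hdet : forall i j, t i j * t (i+1) (j+1) - t i (j+1) * t (i+1) j = 1.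

Lemma rows (x y : Z) (n : nat) :
  t x y * t (x + Z.of_nat n + 1) (y+1) > t x (y+1) * t (x + Z.of_nat n + 1) y.
Proof.
  induction n.
  - simpl. replace (x+0+1) with (x+1) by lia. specialize (Hdet x y). lia.
  - replace (x + Z.of_nat (S n) + 1) with ((x + Z.of_nat n + 1) + 1) by lia.
    eapply trans_aux; try apply IHn; try (apply Z.lt_le_trans with 1; [lia|apply Hpos]).
    specialize (Hdet (x + Z.of_nat n + 1) y). lia.
Qed.

Lemma full (x x' y : Z) (m : nat) : x < x' ->
  t x y * t x' (y + Z.of_nat m + 1) > t x (y + Z.of_nat m + 1) * t x' y.
Proof.
  intros Hx.
  assert (Hr : forall z, t x z * t x' (z+1) > t x (z+1) * t x' z).
  { intro z. replace x' with (x + Z.of_nat (Z.to_nat (x' - x - 1)) + 1) by lia.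
    apply rows. }
  induction m.
  - simpl. replace (y+0+1) with (y+1) by lia. apply Hr.
  - replace (y + Z.of_nat (S m) + 1) with ((y + Z.of_nat m + 1) + 1) by lia.
    set (z := y + Z.of_nat m + 1) in *.
    specialize (Hr z).
    pose proof (Hpos x y); pose proof (Hpos x z); pose proof (Hpos x' y);
    pose proof (Hpos x' z); pose proof (Hpos x (z+1)); pose proof (Hpos x' (z+1)).
    assert (K : t x y * t x' (z+1) * (t x z * t x' z) > t x (z+1) * t x' y * (t x z * t x' z)).
    { assert (t x y * t x' z * (t x z * t x' (z+1)) > t x z * t x' y * (t x z * t x' (z+1)))
        by (apply Zmult_gt_compat_r; lia).
      assert (t x z * t x' y * (t x z * t x' (z+1)) >= t x z * t x' y * (t x (z+1) * t x' z)).
      { apply Z.le_ge, Z.mul_le_mono_nonneg_l; lia. }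
      nia. }
    assert (0 < t x z * t x' z) by lia.
    destruct (Z_gt_le_dec (t x y * t x' (z+1)) (t x (z+1) * t x' y)); [lia|].
    assert (t x y * t x' (z+1) * (t x z * t x' z) <= t x (z+1) * t x' y * (t x z * t x' z))
      by (apply Z.mul_le_mono_nonneg_r; lia). lia.
Qed.

Lemma gen (x x' y y' : Z) : x < x' -> y < y' ->
  t x y * t x' y' > t x y' * t x' y.
Proof.
  intros. replace y' with (y + Z.of_nat (Z.to_nat (y' - y - 1)) + 1) by lia.
  apply full; lia.
Qed.
End S.

Theorem proposition6p2 (t : Z -> Z -> Z) (i j : Z) :
  is_SL2_tiling t -> t i j = 1 ->
  (forall x y, x < i -> y < j -> t x y <> 1) /\
  (forall x y, i < x -> j < y -> t x y <> 1).
Proof.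
  intros [Hp Hd] H1. split; intros x y Hx Hy Hc.
  - pose proof (gen t Hp Hd x i y j Hx Hy).
    pose proof (Hp x j); pose proof (Hp i y). nia.
  - pose proof (gen t Hp Hd i x j y Hx Hy).
    pose proof (Hp i y); pose proof (Hp x j). nia.
Qed.
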